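(* Let $T\in\mathbb{T}$ have a positive weight on each edge, and let $A$ be its adjacency matrix. Then there exists a signature matrix $S$ such that $SA^{\#}S$ is a nonnegative matrix.
   Context: $\mathbb{T}$ is the class of simple undirected weighted trees $T$ such that (i) $T$ has at least one non-pendant vertex, and (ii) every non-pendant vertex of $T$ is adjacent to at least one pendant vertex (a vertex of degree one). The adjacency matrix $A$ has $(i,j)$ entry equal to the weight of edge $v_iv_j$, or $0$ if no edge; $A^{\#}$ is its group inverse (unique $X$ with $AXA=A$, $XAX=X$, $AX=XA$). A signature matrix is a diagonal matrix with diagonal entries in $\{1,-1\}$. *)

(* Defs.v *)
From HB Require Import structures.
From mathcomp Require Import all_boot all_order all_algebra.
Set Implicit Arguments. Unset Strict Implicit. Unset Printing Implicit Defensive.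
Import Order.TTheory GRing.Theory Num.Theory.
Local Open Scope ring_scope.

Definition simple_graph (n : nat) (e : rel 'I_n) : Prop :=
  (forall i, ~~ e i i) /\ (forall i j, e i j = e j i).

Definition num_edges (n : nat) (e : rel 'I_n) : nat :=
  #|[set p : 'I_n * 'I_n | (p.1 < p.2)%N && e p.1 p.2]|.

Definition is_tree (n : nat) (e : rel 'I_n) : Prop :=
  [/\ simple_graph e, (forall i j, connect e i j) & num_edges e = n.-1].

Definition degree (n : nat) (e : rel 'I_n) (i : 'I_n) : nat := #|[set j | e i j]|.

Definition pendant (n : nat) (e : rel 'I_n) (i : 'I_n) : bool := degree e i == 1%N.

Definition in_class_T (n : nat) (e : rel 'I_n) : Prop :=
  [/\ is_tree e,
      exists i, ~~ pendant e i
    & forall i, ~~ pendant e i -> exists j, e i j && pendant e j].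

Definition adjacency (R : ringType) (n : nat) (e : rel 'I_n) (w : 'I_n -> 'I_n -> R)
  : 'M[R]_n := \matrix_(i, j) (if e i j then w i j else 0).

Definition group_inverse (R : ringType) (n : nat) (A X : 'M[R]_n) : Prop :=
  [/\ A *m X *m A = A, X *m A *m X = X & A *m X = X *m A].

Definition signature_matrix (R : ringType) (n : nat) (S : 'M[R]_n) : Prop :=
  exists d : 'rV[R]_n, S = diag_mx d /\ forall j, d 0 j = 1 \/ d 0 j = -1.

Definition nonneg_matrix (R : numDomainType) (n : nat) (M : 'M[R]_n) : Prop :=
  forall i j, 0 <= M i j.

(* Main.v *)
Require Import Defs.
From HB Require Import structures.
From mathcomp Require Import all_boot all_order all_algebra.
Set Implicit Arguments. Unset Strict Implicit. Unset Printing Implicit Defensive.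
Import Order.TTheory GRing.Theory Num.Theory.
Local Open Scope ring_scope.

Lemma ginv_unique (R : ringType) n (A X Y : 'M[R]_n) :
  group_inverse A X -> group_inverse A Y -> X = Y.
Proof.
case=> h1 h2 h3 [k1 k2 k3].
have PQ : A *m X = A *m Y.
  have e2 : A *m X = A *m X *m (A *m Y).
    have -> : A *m X *m (A *m Y) = X *m (A *m Y *m A).
      by rewrite h3 {1}k3 !mulmxA.
    by rewrite k1.
  have e3 : A *m Y = A *m X *m (A *m Y) by rewrite -{1}h1 !mulmxA.
  by rewrite e2 -e3.
have ->: X = X *m A *m Y by rewrite -mulmxA -PQ mulmxA h2.
by rewrite -h3 PQ k3 k2.
Qed.

Section Main.
Variable R : realFieldType.
Variable n : nat.
Variable e : rel 'I_n.
Variable w : 'I_n -> 'I_n -> R.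
Hypothesis hT : in_class_T e.
Hypothesis wsym : forall i j, e i j -> w i j = w j i.
Hypothesis wpos : forall i j, e i j -> 0 < w i j.

Lemma e_sym i j : e i j = e j i.
Proof. by case: hT => [[[_ h] _ _] _ _]. Qed.

Lemma eirr i : e i i = false.
Proof. by case: hT => [[[h _] _ _] _ _]; apply/negbTE. Qed.

Lemma econn i j : connect e i j.
Proof. by case: hT => [[_ h _] _ _]. Qed.

Lemma pend_nb u a b : pendant e u -> e u a -> e u b -> a = b.
Proof.
rewrite /pendant /degree => /cards1P [x hx] ha hb.
have : a \in [set j | e u j] by rewrite inE.
have : b \in [set j | e u j] by rewrite inE.
by rewrite hx !inE => /eqP -> /eqP ->.
Qed.

Lemma pend_pend u v : pendant e u -> pendant e v -> e u v = false.
Proof.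
move=> pu pv; apply/negbTE/negP => euv.
case: hT => _ [r nr] _.
pose a := [pred x | (x == u) || (x == v)].
have cl : closed e a.
  move=> x y exy; rewrite !inE.
  case: (eqVneq x u) => [xu|xu]; first subst x.
    by rewrite (pend_nb pu exy euv) eqxx orbT.
  case: (eqVneq x v) => [xv|xv]; first subst x.
    by rewrite e_sym in euv; rewrite (pend_nb pv exy euv) eqxx.
  case: (eqVneq y u) => [yu|//].
    by rewrite yu e_sym in exy; rewrite (pend_nb pu exy euv) eqxx in xv.
  case: (eqVneq y v) => [yv|//].
    rewrite yv e_sym in exy; rewrite e_sym in euv.
    by rewrite (pend_nb pv exy euv) eqxx in xu.
have := closed_connect cl (econn u r).
rewrite !inE eqxx /= => /esym /orP [] /eqP rx; by rewrite rx ?pu ?pv in nr.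
Qed.


Lemma two_color : exists s : 'I_n -> R,
  (forall i, s i = 1 \/ s i = -1) /\ (forall i j, e i j -> s i = - s j).
Proof.
case: hT => [[_ _ hE] [r _] _].
set Ed := [set p : 'I_n * 'I_n | (p.1 < p.2)%N && e p.1 p.2].
have cardEd : #|Ed| = n.-1 by [].
pose M := \matrix_(i < n, k < #|Ed|)
   ((((enum_val k).1 == i)%:R + ((enum_val k).2 == i)%:R) : R).
have : kermx M != 0.
  rewrite -mxrank_eq0 mxrank_ker subn_eq0 -ltnNge.
  apply: (leq_ltn_trans (rank_leq_col M)).
  by rewrite cardEd; case: n r => [[]|m] //.
case/rowV0Pn => v /sub_kermxP vM v0.
have hlt : forall a b : 'I_n, (a < b)%N -> e a b -> v 0 a = - v 0 b.
  move=> a b ab eab.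
  have Hab : (a, b) \in Ed by rewrite inE /= ab eab.
  have := congr1 (fun m : 'rV[R]_#|Ed| => m 0 (enum_rank_in Hab (a, b))) vM.
  rewrite !mxE.
  under eq_bigr do rewrite /M mxE (enum_rankK_in Hab Hab) mulrDr /=.
  have sd : forall x : 'I_n, \sum_j v 0 j * (x == j)%:R = v 0 x.
    move=> x; rewrite (bigD1 x) //= eqxx mulr1 big1 ?addr0 // => j.
    by rewrite eq_sym => /negbTE ->; rewrite mulr0.
  by rewrite big_split /= !sd => /eqP; rewrite addr_eq0 => /eqP.
have hedge : forall a b, e a b -> v 0 a = - v 0 b.
  move=> a b eab; case: (ltngtP a b) => [ab|ba|/val_inj ab].
  - exact: hlt.
  - by rewrite e_sym in eab; rewrite (hlt _ _ ba eab) opprK.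
  - by rewrite ab eirr in eab.
have [j0 vj0] : exists j, v 0 j != 0.
  case: (pickP (fun j => v 0 j != 0)) => [j vj|h]; first by exists j.
  by case/eqP: v0; apply/rowP => j; rewrite mxE; move: (h j) => /negbFE/eqP.
have hnz : forall j, v 0 j != 0.
  move=> j.
  have cl : closed e [pred x | `|v 0 x| == `|v 0 j0|].
    by move=> x y exy; rewrite !inE (hedge x y exy) normrN.
  have := closed_connect cl (econn j0 j); rewrite !inE eqxx => /esym/eqP hj.
  by rewrite -normr_eq0 hj normr_eq0.
exists (fun j => if 0 < v 0 j then 1 else -1); split.
  by move=> i; case: ifP => _; [left|right].
move=> i j eij; rewrite (hedge i j eij) oppr_gt0.
case: (ltrgtP (v 0 j) 0) => [vn|vp|vz]; rewrite ?opprK //.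
by move: (hnz j); rewrite vz eqxx.
Qed.


Definition mA := adjacency e w.
Definition nv i : R := (~~ pendant e i)%:R.
Definition pv i : R := (pendant e i)%:R.
Definition In : 'M[R]_n := diag_mx (\row_i nv i).
Definition Pn : 'M[R]_n := diag_mx (\row_i pv i).
Definition mB := locked (In *m mA *m In).
Definition mC := locked (In *m mA *m Pn).
Definition mD := locked (mC *m mC^T).
Lemma mBE : mB = In *m mA *m In. Proof. by rewrite /mB -lock. Qed.
Lemma mCE : mC = In *m mA *m Pn. Proof. by rewrite /mC -lock. Qed.
Lemma mDE : mD = mC *m mC^T. Proof. by rewrite /mD -lock. Qed.
Definition dinv i := if ~~ pendant e i then (mD i i)^-1 else 0.
Definition Dinv : 'M[R]_n := diag_mx (\row_i dinv i).
Definition mE := locked (Dinv *m mC).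
Lemma mEE : mE = Dinv *m mC. Proof. by rewrite /mE -lock. Qed.
Definition X0 := mE + mE^T - mE^T *m mB *m mE.

Lemma InIn : In *m In = In.
Proof. by rewrite /In mulmx_diag; congr diag_mx; apply/rowP=> i; rewrite !mxE /nv; case: pendant; rewrite ?mulr1 ?mulr0. Qed.
Lemma PnPn : Pn *m Pn = Pn.
Proof. by rewrite /Pn mulmx_diag; congr diag_mx; apply/rowP=> i; rewrite !mxE /pv; case: pendant; rewrite ?mulr1 ?mulr0. Qed.
Lemma InPn : In *m Pn = 0.
Proof. by rewrite /In /Pn mulmx_diag; apply/matrixP=> i j; rewrite !mxE /pv /nv; case: pendant; rewrite ?mulr1 ?mulr0 ?mul0rn. Qed.
Lemma PnIn : Pn *m In = 0.
Proof. by rewrite /In /Pn mulmx_diag; apply/matrixP=> i j; rewrite !mxE /pv /nv; case: pendant; rewrite ?mulr1 ?mulr0 ?mul0rn. Qed.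
Lemma InPn1 : In + Pn = 1%:M.
Proof. by apply/matrixP=> i j; rewrite !mxE /pv /nv -mulrnDl; case: pendant; rewrite ?addr0 ?add0r. Qed.

Lemma trA : mA^T = mA.
Proof.
apply/matrixP=> i j; rewrite !mxE e_sym.
by case: ifP => // eij; rewrite (wsym eij).
Qed.

Lemma Aentry i j : mA i j = if e i j then w i j else 0.
Proof. by rewrite mxE. Qed.

Lemma PAP : Pn *m mA *m Pn = 0.
Proof.
apply/matrixP=> i j; rewrite mul_mx_diag mul_diag_mx !mxE /pv.
case pi: (pendant e i); last by rewrite /= !mul0r.
case pj: (pendant e j); last by rewrite /= mulr0.
by rewrite (pend_pend pi pj) mulr0 mul0r.
Qed.

Lemma trIn : In^T = In. Proof. exact: tr_diag_mx. Qed.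
Lemma trPn : Pn^T = Pn. Proof. exact: tr_diag_mx. Qed.
Lemma trDinv : Dinv^T = Dinv. Proof. exact: tr_diag_mx. Qed.

Lemma trC : mC^T = Pn *m mA *m In.
Proof. by rewrite mCE !trmx_mul trIn trPn trA mulmxA. Qed.
Lemma trB : mB^T = mB.
Proof. by rewrite mBE !trmx_mul trIn trA mulmxA. Qed.

Lemma Adec : mA = mB + mC + mC^T.
Proof.
rewrite trC mBE mCE.
have h : (In + Pn) *m mA *m (In + Pn) = mA by rewrite InPn1 mul1mx mulmx1.
rewrite -{1}h !mulmxDl !mulmxDr PAP addr0 -!addrA; congr (_ + _); exact: addrC.
Qed.


Lemma Centry i k :
  mC i k = if ~~ pendant e i && pendant e k && e i k then w i k else 0.
Proof.
rewrite mCE mul_mx_diag mul_diag_mx !mxE /nv /pv.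
by case: (pendant e i); case: (pendant e k); case: (e i k);
  rewrite /= ?mul1r ?mulr1 ?mul0r ?mulr0.
Qed.

Lemma Bentry i k :
  mB i k = if ~~ pendant e i && ~~ pendant e k && e i k then w i k else 0.
Proof.
rewrite mBE mul_mx_diag mul_diag_mx !mxE /nv.
by case: (pendant e i); case: (pendant e k); case: (e i k);
  rewrite /= ?mul1r ?mulr1 ?mul0r ?mulr0.
Qed.

Lemma C_ge0 i k : 0 <= mC i k.
Proof. rewrite Centry; case: ifP => // /andP [_ h]; exact: ltW (wpos h). Qed.

Lemma B_ge0 i k : 0 <= mB i k.
Proof. rewrite Bentry; case: ifP => // /andP [_ h]; exact: ltW (wpos h). Qed.

Lemma Dentry i j : mD i j = \sum_k mC i k * mC j k.
Proof. by rewrite mDE [LHS]mxE; apply: eq_bigr => k _; rewrite [mC^T _ _]mxE. Qed.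

Lemma D_off i j : i != j -> mD i j = 0.
Proof.
move=> ij; rewrite Dentry big1 // => k _; rewrite !Centry.
case: ifP => [/andP [/andP [_ pk] eik]|]; last by rewrite mul0r.
case: ifP => [/andP [/andP [_ _] ejk]|]; last by rewrite mulr0.
rewrite e_sym in eik; rewrite e_sym in ejk.
by rewrite (pend_nb pk eik ejk) eqxx in ij.
Qed.

Lemma D_ge0 i : 0 <= mD i i.
Proof. by rewrite Dentry sumr_ge0 // => k _; rewrite mulr_ge0 // C_ge0. Qed.

Lemma D_pos i : ~~ pendant e i -> 0 < mD i i.
Proof.
move=> ni; case: hT => _ _ /(_ i ni) [u /andP [eiu pu]].
rewrite Dentry (bigD1 u) //=.
apply: ltr_wpDr; first by rewrite sumr_ge0 // => k _; rewrite mulr_ge0 // C_ge0.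
by rewrite Centry ni pu eiu /= mulr_gt0 // wpos.
Qed.

Lemma dinv_ge0 i : 0 <= dinv i.
Proof. by rewrite /dinv; case: ifP => // _; rewrite invr_ge0 D_ge0. Qed.

Lemma DDinv : mD *m Dinv = In.
Proof.
apply/matrixP=> i j; rewrite /Dinv mul_mx_diag [LHS]mxE [In i j]mxE [(\row_ _ _) 0 j]mxE [(\row_ _ _) 0 i]mxE.
case: (eqVneq i j) => [<-|ij]; last by rewrite D_off // mul0r.
rewrite /dinv /nv /=; case: ifP => ni; last by rewrite mulr0.
by rewrite mulfV // gt_eqF // D_pos.
Qed.

Lemma DinvD : Dinv *m mD = In.
Proof.
apply/matrixP=> i j; rewrite /Dinv mul_diag_mx [LHS]mxE [In i j]mxE [(\row_ _ _) 0 i]mxE.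
case: (eqVneq i j) => [<-|ij]; last by rewrite D_off // mulr0.
rewrite /dinv /nv /= [(\row_ _ _) 0 i]mxE; case: ifP => ni; last by rewrite mul0r mulr1n.
by rewrite mulVf // gt_eqF // D_pos.
Qed.

Lemma InDinv : In *m Dinv = Dinv.
Proof.
apply/matrixP=> i j; rewrite /Dinv /In mulmx_diag !mxE /nv /dinv.
by case: ifP; rewrite /= ?mul1r ?mul0r.
Qed.

Lemma DinvIn : Dinv *m In = Dinv.
Proof.
apply/matrixP=> i j; rewrite /Dinv /In mulmx_diag !mxE /nv /dinv.
by case: ifP; rewrite /= ?mulr1 ?mulr0.
Qed.


Lemma mlift (X Y Z : 'M[R]_n) : X *m Y = Z -> forall M : 'M[R]_n, M *m X *m Y = M *m Z.
Proof. by move=> h M; rewrite -mulmxA h. Qed.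

Definition InPnM := mlift InPn.
Definition PnInM := mlift PnIn.
Definition InInM := mlift InIn.
Definition PnPnM := mlift PnPn.
Definition InDinvM := mlift InDinv.
Definition DinvInM := mlift DinvIn.

Ltac simp := rewrite ?mulmxA ?InPn ?PnIn ?InIn ?PnPn ?InPnM ?PnInM ?InInM ?PnPnM
   ?mulmx0 ?mul0mx ?InDinv ?DinvIn ?InDinvM ?DinvInM ?mulmx0 ?mul0mx.

Lemma r1 : mB *m mC^T = 0. Proof. by rewrite mBE trC; simp. Qed.
Lemma r2 : mC *m Dinv = 0. Proof. by rewrite mCE -InDinv; simp. Qed.
Lemma r5 : In *m mB = mB. Proof. by rewrite mBE; simp. Qed.
Lemma r6 : mC^T *m mC^T = 0. Proof. by rewrite trC; simp. Qed.
Lemma r7 : mC *m mC = 0. Proof. by rewrite mCE; simp. Qed.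
Lemma r8 : In *m mC = mC. Proof. by rewrite mCE; simp. Qed.
Lemma r9 : In *m mC^T = 0. Proof. by rewrite trC; simp. Qed.
Lemma r10 : mC^T *m In = mC^T. Proof. by rewrite trC; simp. Qed.
Lemma r13 : mC *m mB = 0. Proof. by rewrite mCE mBE; simp. Qed.
Lemma r15 : Dinv *m mC^T = 0. Proof. by rewrite trC -DinvIn; simp. Qed.
Lemma r3 : mC *m mC^T = mD. Proof. by rewrite mDE. Qed.

Definition r1M := mlift r1.
Definition r2M := mlift r2.
Definition r3M := mlift r3.
Definition r4M := mlift DDinv.
Definition r17M := mlift DinvD.
Definition r5M := mlift r5.
Definition r6M := mlift r6.
Definition r7M := mlift r7.
Definition r8M := mlift r8.
Definition r9M := mlift r9.
Definition r10M := mlift r10.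
Definition r13M := mlift r13.
Definition r15M := mlift r15.

Ltac simp2 := rewrite ?mulmxA;
  rewrite ?r1 ?r2 ?r3 ?DDinv ?DinvD ?r5 ?r6 ?r7 ?r8 ?r9 ?r10 ?r13 ?r15
    ?r1M ?r2M ?r3M ?r4M ?r17M ?r5M ?r6M ?r7M ?r8M ?r9M ?r10M ?r13M ?r15M
    ?InIn ?InInM ?InDinv ?DinvIn ?InDinvM ?DinvInM ?mulmx0 ?mul0mx.

Lemma trE : mE^T = mC^T *m Dinv.
Proof. by rewrite mEE trmx_mul trDinv. Qed.

Lemma trX0 : X0^T = X0.
Proof.
rewrite /X0 linearD linearN /= linearD /= trmxK (trmx_mul (mE^T *m mB) mE) (trmx_mul mE^T mB) trmxK trB.
by rewrite [mE^T + mE]addrC !mulmxA.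
Qed.

Lemma AX0 : mA *m X0 = In + mC^T *m Dinv *m mC.
Proof.
rewrite Adec /X0 trE mEE !mulmxDl !mulmxDr ?mulmxN.
simp2.
by rewrite !addr0 !subr0 add0r (addrC _ (In - _)) subrK.
Qed.


Lemma X0A : X0 *m mA = In + mC^T *m Dinv *m mC.
Proof.
rewrite -[X0]trX0 -{1}trA -trmx_mul AX0 linearD /= trIn.
by rewrite (trmx_mul (mC^T *m Dinv) mC) (trmx_mul mC^T Dinv) trDinv trmxK mulmxA.
Qed.

Lemma AX0A : mA *m X0 *m mA = mA.
Proof.
rewrite AX0 Adec !mulmxDl !mulmxDr. simp2; simp2.
by rewrite ?addr0 ?subr0 ?add0r ?addrA.
Qed.

Lemma X0AX0 : X0 *m mA *m X0 = X0.
Proof.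
rewrite X0A /X0 trE mEE !mulmxDl !mulmxDr ?mulmxN. simp2; simp2.
by rewrite ?addr0 ?subr0 ?add0r ?addrA.
Qed.


Lemma X0_ginv : group_inverse mA X0.
Proof. by split; [exact: AX0A | exact: X0AX0 | rewrite AX0 X0A]. Qed.

Lemma Eentry a i : mE a i = dinv a * mC a i.
Proof. by rewrite mEE /Dinv mul_diag_mx !mxE. Qed.

Lemma main_in : exists S : 'M[R]_n, signature_matrix S /\
    forall X, group_inverse mA X -> nonneg_matrix (S *m X *m S).
Proof.
have [s [s1 s2]] := two_color.
pose t j := if pendant e j then - s j else s j.
have t1 : forall j, t j = 1 \/ t j = -1.
  move=> j; rewrite /t; case: (s1 j) => ->; case: pendant; rewrite ?opprK; by [left|right].
have tt1 : forall j, t j * t j = 1.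
  by move=> j; case: (t1 j) => ->; rewrite ?mulrNN mulr1.
have hsig1 : forall a i, e a i -> ~~ pendant e a -> pendant e i -> t a = t i.
  by move=> a i eai na pi; rewrite /t (negbTE na) pi (s2 a i eai).
have hsig2 : forall a b, e a b -> ~~ pendant e a -> ~~ pendant e b -> t a = - t b.
  by move=> a b eab na nb; rewrite /t (negbTE na) (negbTE nb) (s2 a b eab).
have Eterm : forall a i, 0 <= t a * t i * mE a i.
  move=> a i; rewrite Eentry Centry.
  case: ifP => [/andP [/andP [na pi] eai]|_]; last by rewrite !mulr0.
  rewrite (hsig1 a i eai na pi) tt1 mul1r mulr_ge0 ?dinv_ge0 //.
  exact: ltW (wpos eai).
exists (diag_mx (\row_j t j)); split.
  by exists (\row_j t j); split => // j; rewrite mxE.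
move=> X hX; have <- := ginv_unique X0_ginv hX.
move=> i j; rewrite mul_mx_diag mxE mul_diag_mx mxE !mxE.
rewrite mulrBr mulrDr mulrBl mulrDl; apply: addr_ge0; first apply: addr_ge0.
- by rewrite mulrAC Eterm.
- by rewrite mulrC mulrA Eterm.
rewrite mulrAC -mulNr mulr_sumr; apply: sumr_ge0 => b _.
rewrite mxE mulr_suml mulr_sumr; apply: sumr_ge0 => a _.
rewrite mxE !Eentry Bentry !Centry.
case h1: (~~ pendant e a && pendant e i && e a i); last by rewrite /= !(mulr0, mul0r).
case h2: (~~ pendant e a && ~~ pendant e b && e a b); last by rewrite /= !(mulr0, mul0r).
case h3: (~~ pendant e b && pendant e j && e b j); last by rewrite /= !(mulr0, mul0r).
move/andP: h1 => [/andP [na pi] eai]; move/andP: h2 => [/andP [_ nb] eab].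
move/andP: h3 => [/andP [_ pj] ebj].
rewrite -(hsig1 a i eai na pi) -(hsig1 b j ebj nb pj) (hsig2 a b eab na nb).
rewrite (mulNr (t b)) opprK tt1 mul1r.
by rewrite !mulr_ge0 ?dinv_ge0 // ltW // wpos.
Qed.

End Main.

Theorem theorem3p8 (R : realFieldType) (n : nat) (e : rel 'I_n)
    (w : 'I_n -> 'I_n -> R) :
  in_class_T e ->
  (forall i j, e i j -> w i j = w j i) ->
  (forall i j, e i j -> 0 < w i j) ->
  (exists X, group_inverse (adjacency e w) X) /\
  exists S : 'M[R]_n, signature_matrix S /\
    forall X, group_inverse (adjacency e w) X -> nonneg_matrix (S *m X *m S).
Proof.
move=> hT wsym wpos; split.
  by exists (X0 e w); exact: (X0_ginv hT wsym wpos).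
exact: (main_in hT wsym wpos).
Qed.
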